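(* Let $(M,g)$ be a Riemannian manifold with positive curvature operator and let $f$ be a smooth function on $M$. Then pointwise on $M$, $$R_{ijkl}R_{ik}f_jf_l\ge 0.$$
   Context: All tensors are written in components with respect to local orthonormal frames, with repeated indices summed. $R_{ijkl}$ is the Riemann curvature tensor, normalized so that $R_{ijij}$ is the sectional curvature of the plane spanned by $e_i,e_j$, and the Ricci tensor is $R_{jk}=R_{ijik}$; $f_i=\nabla_if$. The curvature operator is the symmetric operator on $2$-forms whose quadratic form is $\omega\mapsto R_{ikjl}\omega_{ik}\omega_{jl}$; ''positive'' means this form is positive definite. *)

(* Defs.v *)
From HB Require Import structures.
From mathcomp Require Import all_boot all_order all_algebra.
From mathcomp Require Import reals.
Set Implicit Arguments. Unset Strict Implicit. Unset Printing Implicit Defensive.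
Import Order.TTheory GRing.Theory Num.Theory.
Local Open Scope ring_scope.

(* Pointwise (algebraic) setting: components of a tensor in an orthonormal
   frame e_0,...,e_{n-1} of the tangent space T_pM. *)
Definition tensor4 (R : Type) (n : nat) := 'I_n -> 'I_n -> 'I_n -> 'I_n -> R.

Definition is_curvature_tensor (R : realType) (n : nat) (Rm : tensor4 R n) :=
  [/\ (forall i j k l, Rm i j k l = - Rm j i k l),
      (forall i j k l, Rm i j k l = - Rm i j l k),
      (forall i j k l, Rm i j k l = Rm k l i j) &
      (forall i j k l, Rm i j k l + Rm j k i l + Rm k i j l = 0)].

Definition ricci (R : realType) (n : nat) (Rm : tensor4 R n) (j k : 'I_n) : R :=
  \sum_(i < n) Rm i j i k.

Definition two_form (R : realType) (n : nat) (w : 'M[R]_n) := w^T = - w.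

Definition curv_op_form (R : realType) (n : nat) (Rm : tensor4 R n) (w : 'M[R]_n) : R :=
  \sum_(i < n) \sum_(k < n) \sum_(j < n) \sum_(l < n) Rm i k j l * w i k * w j l.

Definition pos_curv_op (R : realType) (n : nat) (Rm : tensor4 R n) :=
  forall w : 'M[R]_n, two_form w -> w != 0 -> 0 < curv_op_form Rm w.

(* Main.v *)
Require Import Defs.
From HB Require Import structures.
From mathcomp Require Import all_boot all_order all_algebra.
From mathcomp Require Import reals.
From mathcomp Require Import ring lra.
Import Order.TTheory GRing.Theory Num.Theory.
Local Open Scope ring_scope.

Set Implicit Arguments. Unset Strict Implicit.
Section K.
Variable R : realFieldType.
Definition qf n (B : 'I_n -> 'I_n -> R) (x : 'I_n -> R) :=
  \sum_(i < n) \sum_(k < n) x i * B i k * x k.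

Lemma sum_deltar n (G : 'I_n -> R) p : \sum_(i < n) G i * (i == p)%:R = G p.
Proof.
rewrite (bigD1 p) //= eqxx mulr1 big1 ?addr0 // => i /negbTE ->; by rewrite mulr0.
Qed.

Lemma sum_delta2 n (G : 'I_n -> R) (a b : R) (p q : 'I_n) :
  \sum_(i < n) G i * (a * (i == p)%:R + b * (i == q)%:R) = a * G p + b * G q.
Proof.
under eq_bigr => i _ do rewrite mulrDr (mulrC a) (mulrC b) !mulrA.
by rewrite big_split /= -!(mulr_suml) !sum_deltar !(mulrC _ a) (mulrC _ b).
Qed.

Lemma qfE n (B : 'I_n -> 'I_n -> R) x :
  qf B x = \sum_(i < n) x i * \sum_(k < n) B i k * x k.
Proof. apply: eq_bigr => i _; rewrite big_distrr. apply: eq_bigr => k _ /=. by rewrite mulrA. Qed.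

Lemma qf_delta2 n (B : 'I_n -> 'I_n -> R) (a b : R) (p q : 'I_n) :
  qf B (fun j => a * (j == p)%:R + b * (j == q)%:R) =
  a * a * B p p + a * b * (B p q + B q p) + b * b * B q q.
Proof.
rewrite qfE.
under eq_bigr => i _ do rewrite sum_delta2 mulrC.
rewrite sum_delta2; ring.
Qed.

Lemma psd_zero n (B : 'I_n -> 'I_n -> R) i k :
  (forall i k, B i k = B k i) -> (forall x, 0 <= qf B x) -> B i i = 0 -> B i k = 0.
Proof.
move=> Bs Bp Bii.
have [<-|ne] := eqVneq i k; first exact: Bii.
apply/eqP; apply/negPn/negP => nz.
set t := - (B k k + 1) / (B i k + B i k).
have h2 : B i k + B i k != 0 by rewrite -mulr2n mulrn_eq0 negb_or nz.
have ht : t * (B i k + B i k) = - (B k k + 1) by rewrite /t divfK.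
have := Bp (fun j => t * (j == i)%:R + 1 * (j == k)%:R).
rewrite qf_delta2 Bii (Bs k i) mulr0 mulr1 add0r ht mul1r; lra.
Qed.

Lemma key_gen n (A : 'I_n -> 'I_n -> R) : (forall x, 0 <= qf A x) ->
  forall N (B : 'I_n -> 'I_n -> R), (#|[set i | B i i != 0%R]| <= N)%N ->
  (forall i k, B i k = B k i) -> (forall x, 0 <= qf B x) ->
  0 <= \sum_(i < n) \sum_(k < n) A i k * B i k.
Proof.
move=> Ap; elim=> [|N IH] B hN Bs Bp.
  have Z : forall i k, B i k = 0.
    move=> i k; apply: psd_zero => //.
    move: hN; rewrite leqn0 cards_eq0 => /eqP/setP/(_ i).
    by rewrite inE in_set0 => /negbFE/eqP.
  by rewrite big1 // => i _; rewrite big1 // => k _; rewrite Z mulr0.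
have [E|[p]] := set_0Vmem [set i | B i i != 0%R].
  apply: IH => //; by rewrite E cards0.
rewrite inE => nzp.
set d := B p p.
have d0 : 0 < d.
  rewrite lt0r nzp /=.
  have := Bp (fun j => 1 * (j == p)%:R + 0 * (j == p)%:R).
  by rewrite qf_delta2 !(mul0r, mulr0, addr0, mul1r).
set B' := fun i k => B i k - B i p * B k p / d.
have B's : forall i k, B' i k = B' k i.
  by move=> i k; rewrite /B' Bs (mulrC (B i p)).
have sdl : forall (G x : 'I_n -> R) c, \sum_(k < n) G k * (x k - c * (k == p)%:R) = \sum_(k < n) G k * x k - c * G p.
  move=> G x c; under eq_bigr => k _ do rewrite mulrBr mulrCA.
  by rewrite sumrB -big_distrr /= sum_deltar.
have Bp' : forall x, 0 <= qf B' x.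
  move=> x.
  set s := \sum_(k < n) B p k * x k.
  set c := s / d.
  have sE : s = \sum_(i < n) x i * B i p.
    by apply: eq_bigr => i _; rewrite Bs mulrC.
  have e1 : qf B' x = qf B x - s * s / d.
    have -> : s * s / d = \sum_(i < n) \sum_(k < n) x i * B i p * (B k p * x k) / d.
      rewrite {1}sE big_distrl /= big_distrl /=; apply: eq_bigr => i _.
      rewrite big_distrr /= big_distrl /=; apply: eq_bigr => k _.
      by rewrite (Bs p k).
    rewrite /qf /B' -sumrB; apply: eq_bigr => i _.
    rewrite -sumrB; apply: eq_bigr => k _ /=; ring.
  have e2 : qf B (fun j => x j - c * (j == p)%:R) = qf B x - s * s / d.
    rewrite qfE /=.
    under eq_bigr => i _ do rewrite sdl mulrC.
    rewrite sdl.
    have -> : \sum_(i < n) (\sum_(k < n) B i k * x k - c * B i p) * x i = qf B x - c * s.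
      under eq_bigr => i _ do rewrite mulrBl.
      rewrite sumrB qfE; congr (_ - _).
        by apply: eq_bigr => i _; rewrite mulrC.
      by rewrite sE big_distrr; apply: eq_bigr => i _ /=; rewrite mulrCA mulrC.
    rewrite -/s -/d /c; field.
    by rewrite lt0r_neq0.
  by rewrite e1 -e2.
have card' : (#|[set i | B' i i != 0%R]| <= N)%N.
  have sub : [set i | B' i i != 0%R] \subset [set i | B i i != 0%R] :\ p.
    apply/subsetP => i; rewrite !inE /B' => nz.
    have nz2 := nz; apply/andP; split.
      apply: contraNneq nz2 => ->; by rewrite -/d mulrK ?subrr // unitfE (lt0r_neq0 d0).
    apply: contraNneq nz => Bi0.
    by rewrite Bi0 (psd_zero p Bs Bp Bi0) !mul0r subr0.
  have := subset_leq_card sub.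
  have := cardsD1 p [set i | B i i != 0%R].
  move=> E h; apply: leq_trans h _; move: hN; rewrite E inE nzp; exact.
have key := IH B' card' B's Bp'.
have -> : \sum_(i < n) \sum_(k < n) A i k * B i k =
  \sum_(i < n) \sum_(k < n) A i k * B' i k + qf A (fun i => B i p) / d.
  rewrite /qf big_distrl /= -big_split; apply: eq_bigr => i _.
  rewrite big_distrl /= -big_split; apply: eq_bigr => k _.
  rewrite /B' /=; clearbody d; ring.
apply: addr_ge0 => //; apply: divr_ge0 => //; exact: ltW.
Qed.
End K.

Section M.
Variable R : realType.
Variable n : nat.
Implicit Types F : 'I_n -> 'I_n -> 'I_n -> 'I_n -> R.
Definition S4 F : R := \sum_(i < n) \sum_(k < n) \sum_(j < n) \sum_(l < n) F i k j l.

Lemma S4D F G : S4 (fun i k j l => F i k j l + G i k j l) = S4 F + S4 G.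
Proof.
rewrite /S4 -big_split; apply: eq_bigr => i _; rewrite -big_split; apply: eq_bigr => k _.
rewrite -big_split; apply: eq_bigr => j _; by rewrite -big_split.
Qed.

Lemma S4_12 F : S4 (fun i k j l => F k i j l) = S4 F.
Proof. by rewrite /S4 exchange_big. Qed.

Lemma S4_23 F : S4 (fun i k j l => F i j k l) = S4 F.
Proof. by rewrite /S4; apply: eq_bigr => i _; rewrite exchange_big. Qed.

Lemma S4_34 F : S4 (fun i k j l => F i k l j) = S4 F.
Proof. by rewrite /S4; apply: eq_bigr => i _; apply: eq_bigr => k _; rewrite exchange_big. Qed.

Lemma S4_ext F G : (forall i k j l, F i k j l = G i k j l) -> S4 F = S4 G.
Proof.
move=> h; apply: eq_bigr => i _; apply: eq_bigr => k _; apply: eq_bigr => j _.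
by apply: eq_bigr => l _.
Qed.

Definition Amat (Rm : tensor4 R n) (f : 'I_n -> R) i k :=
  \sum_(j < n) \sum_(l < n) Rm i j k l * f j * f l.

Lemma A_psd Rm f x : is_curvature_tensor Rm -> pos_curv_op Rm -> 0 <= qf (Amat Rm f) x.
Proof.
case=> R1 R2 R3 R4 Hp.
pose w : 'M[R]_n := \matrix_(i, k) (x i * f k - f i * x k).
have tw : two_form w.
  rewrite /two_form; apply/matrixP => i k. rewrite !mxE. ring.
pose G := fun i k j l => Rm i k j l * x i * f k * x j * f l.
have E : curv_op_form Rm w = qf (Amat Rm f) x *+ 4.
  have -> : curv_op_form Rm w = S4 (fun i k j l => G i k j l + G i k l j + (G k i j l + G k i l j)).
    apply: S4_ext => i k j l; rewrite !mxE /G.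
    rewrite (R2 i k l j) (R1 k i j l) (R1 k i l j) (R2 i k l j); ring.
  rewrite !S4D S4_34 S4_12 (S4_34 (fun i k j l => G k i j l)) S4_12.
  have -> : qf (Amat Rm f) x = S4 G.
    rewrite -S4_23 /qf /S4; apply: eq_bigr => i _; apply: eq_bigr => k _.
    rewrite /Amat big_distrr big_distrl /=; apply: eq_bigr => j _.
    rewrite big_distrr big_distrl /=; apply: eq_bigr => l _.
    rewrite /G; ring.
  by rewrite -!mulr2n -mulrnA.
have : 0 <= curv_op_form Rm w.
  case: (eqVneq w 0) => [w0|nz]; last exact: ltW (Hp w tw nz).
  rewrite /curv_op_form big1 // => i _; rewrite big1 // => k _.
  by rewrite big1 // => j _; rewrite big1 // => l _; rewrite w0 !mxE !mulr0.
by rewrite E pmulrn_lge0.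
Qed.

Lemma ricciE Rm : is_curvature_tensor Rm -> forall i k,
  ricci Rm i k = \sum_(m < n) Amat Rm (fun j => (j == m)%:R) i k.
Proof.
case=> R1 R2 R3 R4 i k; apply: eq_bigr => m _.
rewrite /Amat.
under eq_bigr => j _ do rewrite sum_deltar.
rewrite sum_deltar (R1 i m k m) (R2 m i k m) opprK //.
Qed.

Lemma qf_sum (F : 'I_n -> 'I_n -> 'I_n -> R) x :
  qf (fun i k => \sum_(m < n) F m i k) x = \sum_(m < n) qf (F m) x.
Proof.
have -> : qf (fun i k => \sum_(m < n) F m i k) x =
   \sum_(i < n) \sum_(k < n) \sum_(m < n) x i * F m i k * x k.
  apply: eq_bigr => i _; apply: eq_bigr => k _; by rewrite big_distrr big_distrl.
under eq_bigr => i _ do rewrite exchange_big.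
by rewrite exchange_big.
Qed.

End M.

Unset Implicit Arguments. Set Strict Implicit.

(* Pointwise statement: Rm = components of the Riemann tensor at a point in an
   orthonormal frame, df = components f_i of the differential of f there. *)
Theorem lemma5 (R : realType) (n : nat) (Rm : tensor4 R n) (df : 'I_n -> R) :
  is_curvature_tensor Rm -> pos_curv_op Rm ->
  0 <= \sum_(i < n) \sum_(j < n) \sum_(k < n) \sum_(l < n)
         Rm i j k l * ricci Rm i k * df j * df l.
Proof.
move=> Hc Hp.
have Rs : forall i k, ricci Rm i k = ricci Rm k i.
  case: (Hc) => R1 R2 R3 R4 i k; apply: eq_bigr => m _; by rewrite R3.
have Rp : forall x, 0 <= qf (ricci Rm) x.
  move=> x.
  have -> : qf (ricci Rm) x = qf (fun i k => \sum_(m < n) Amat Rm (fun j => (j == m)%:R) i k) x.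
    by apply: eq_bigr => i _; apply: eq_bigr => k _; rewrite (ricciE Hc).
  rewrite qf_sum; apply: sumr_ge0 => m _; exact: A_psd.
have -> : \sum_(i < n) \sum_(j < n) \sum_(k < n) \sum_(l < n)
         Rm i j k l * ricci Rm i k * df j * df l =
   \sum_(i < n) \sum_(k < n) Amat Rm df i k * ricci Rm i k.
  rewrite -[LHS](S4_23 (fun i j k l => Rm i j k l * ricci Rm i k * df j * df l)).
  rewrite /S4; apply: eq_bigr => i _; apply: eq_bigr => k _.
  rewrite /Amat big_distrl /=; apply: eq_bigr => j _.
  rewrite big_distrl /=; apply: eq_bigr => l _; ring.
apply: (@key_gen R n (Amat Rm df) (fun x => A_psd df x Hc Hp) _ _ (leqnn _) Rs Rp).
Qed.
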